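(* Let $n,m\ge1$ and $A\subseteq\Omega_n$. If $\mu_n(A)=0$, then $\mu_{n+m}(A\times\{0,1\}^m)=0$.
   Context: For $n\ge1$, $\Omega_n$ is the set of strings $\omega=\alpha_0\alpha_1\cdots\alpha_n$ with $\alpha_k\in\{0,1\}$, $\alpha_0=0$. For $\omega=\alpha_0\cdots\alpha_n$, $\omega'=\alpha'_0\cdots\alpha'_n\in\Omega_n$ let $D^n(\omega,\omega')=2^{-n}\prod_{k=1}^n i^{|\alpha_k-\alpha_{k-1}|}\prod_{k=1}^n i^{-|\alpha'_k-\alpha'_{k-1}|}\,\delta_{\alpha_n\alpha'_n}$ ($i=\sqrt{-1}$), and for $A\subseteq\Omega_n$ let $\mu_n(A)=\sum_{\omega,\omega'\in A}D^n(\omega,\omega')$ ($A$ is called precluded if $\mu_n(A)=0$). For $A\subseteq\Omega_n$, $A\times\{0,1\}^m\subseteq\Omega_{n+m}$ is the set of strings obtained by appending to the right of some $\omega\in A$ an arbitrary string of $m$ bits. *)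

(* Defs.v *)
From HB Require Import structures.
From mathcomp Require Import all_boot all_order all_algebra algC.
Set Implicit Arguments. Unset Strict Implicit. Unset Printing Implicit Defensive.
Import Order.TTheory GRing.Theory Num.Theory.
Local Open Scope ring_scope.

(* A string omega = alpha_0 alpha_1 ... alpha_n is a function 'I_n.+1 -> bool
   (true = 1, false = 0). *)
Notation bstr n := {ffun 'I_n.+1 -> bool}.

Definition Omega (n : nat) : {set bstr n} := [set w : bstr n | ~~ w ord0].

(* |alpha_k - alpha_{k-1}| for k = 1..n, indexed by k' : 'I_n with k = k'+1. *)
Definition jump (n : nat) (w : bstr n) (k : 'I_n) : nat :=
  (w (lift ord0 k) != w (widen_ord (leqnSn n) k)).

Definition D (n : nat) (w w' : bstr n) : algC :=
  (2 ^- n) * (\prod_(k < n) 'i ^+ jump w k) * (\prod_(k < n) 'i ^- jump w' k)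
  * (w ord_max == w' ord_max)%:R.

Definition mu (n : nat) (A : {set bstr n}) : algC :=
  \sum_(w in A) \sum_(w' in A) D w w'.

Lemma leq_ext (n m : nat) : (n.+1 <= (n + m).+1)%N.
Proof. by rewrite ltnS leq_addr. Qed.

(* A x {0,1}^m : strings in Omega_{n+m} whose first n+1 bits form a string of A *)
Definition ext (n m : nat) (A : {set bstr n}) : {set bstr (n + m)} :=
  [set w : bstr (n + m) |
    [exists v in A, [forall i : 'I_n.+1, w (widen_ord (leq_ext n m) i) == v i]]].

(* Main.v *)
Require Import Defs.
From HB Require Import structures.
From mathcomp Require Import all_boot all_order all_algebra algC.
Import Order.TTheory GRing.Theory Num.Theory.
Set Implicit Arguments. Unset Strict Implicit.
Local Open Scope ring_scope.

Definition amp n (w : bstr n) : algC := \prod_(k < n) 'i ^+ jump w k.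
Definition S n (A : {set bstr n}) (b : bool) : algC :=
  \sum_(w in A) (w ord_max == b)%:R * amp w.

Lemma iV : ('i : algC)^-1 = ('i)^*.
Proof.
rewrite conjCi; apply: (@mulIf _ 'i); first by rewrite neq0Ci.
by rewrite mulVf ?neq0Ci // mulNr -expr2 sqrCi opprK.
Qed.

Lemma DE n (w w' : bstr n) :
  D w w' = 2 ^- n * amp w * (amp w')^* * (w ord_max == w' ord_max)%:R.
Proof.
rewrite /D /amp rmorph_prod; congr (_ * _ * _); apply: eq_bigr => k _.
by rewrite -exprVn iV rmorphXn.
Qed.

Lemma muE n (A : {set bstr n}) :
  mu A = 2 ^- n * \sum_(b : bool) S A b * (S A b)^*.
Proof.
rewrite /mu mulr_sumr; symmetry.
transitivity (\sum_(b : bool) \sum_(w in A) \sum_(w' in A) 2 ^- n *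
  ((w ord_max == b)%:R * amp w * ((w' ord_max == b)%:R * amp w')^*)).
  apply: eq_bigr => b _; rewrite /S rmorph_sum mulr_suml mulr_sumr.
  by apply: eq_bigr => w _; rewrite !mulr_sumr.
rewrite exchange_big; apply: eq_bigr => w _.
rewrite exchange_big; apply: eq_bigr => w' _.
rewrite big_bool /= DE rmorphM /= conjC_nat.
case: (w ord_max); case: (w' ord_max); rewrite /= ?mul0r ?mulr0 ?mul1r ?mulr1 ?addr0 ?add0r ?mulrA.
all: by rewrite ?rmorph0 ?mulr0.
Qed.

Lemma S0 n (A : {set bstr n}) : mu A = 0 -> forall b, S A b = 0.
Proof.
rewrite muE => /eqP; rewrite mulf_eq0 invr_eq0 expf_eq0 pnatr_eq0 andbF /=.
rewrite big_bool paddr_eq0 ?mul_conjC_ge0 // !mul_conjC_eq0 => /andP[/eqP H1 /eqP H2].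
by case.
Qed.

Section Join.
Variables (n m : nat).

Definition tget (t : {ffun 'I_m -> bool}) (j : nat) : bool :=
  if insub j is Some k then t k else false.
Definition tbit (b : bool) (t : {ffun 'I_m -> bool}) (j : nat) : bool :=
  if j is j'.+1 then tget t j' else b.

Lemma tgetE t (k : 'I_m) : tget t k = t k.
Proof. by rewrite /tget valK. Qed.

Definition join (v : bstr n) (t : {ffun 'I_m -> bool}) : bstr (n + m) :=
  [ffun i : 'I_(n + m).+1 => if (i < n)%N then v (inord i)
                             else tbit (v ord_max) t (i - n)].

Definition splt (u : bstr (n + m)) : bstr n * {ffun 'I_m -> bool} :=
  ([ffun i : 'I_n.+1 => u (widen_ord (leq_ext n m) i)],
   [ffun j : 'I_m => u (inord (n + j.+1))]).

Lemma joinL v t (i : 'I_(n + m).+1) (j : 'I_n.+1) :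
  val i = val j -> join v t i = v j.
Proof.
move=> e; rewrite /join ffunE e; case: ifP => h.
  by congr (v _); apply/val_inj; rewrite /= inordK // ltnS ltnW.
have ej : val j = n by have := ltn_ord j; rewrite ltnS leq_eqVlt h orbF => /eqP.
rewrite ej subnn /=; congr (v _); apply/val_inj; by rewrite ej.
Qed.

Lemma joinR v t (i : 'I_(n + m).+1) (j : nat) :
  val i = (n + j)%N -> join v t i = tbit (v ord_max) t j.
Proof.
by move=> e; rewrite /join ffunE e ltnNge leq_addr /= addKn.
Qed.

Lemma joinK : cancel (fun p => join p.1 p.2) splt.
Proof.
case=> v t; rewrite /splt /=; congr (_, _); apply/ffunP => i; rewrite ffunE.
  by rewrite (joinL _ _ (j := i)).
rewrite (joinR _ _ (j := i.+1)) /=; first by rewrite tgetE.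
by rewrite inordK // ltnS leq_add2l.
Qed.

Lemma spltK : cancel splt (fun p => join p.1 p.2).
Proof.
move=> u; apply/ffunP => i; rewrite /join /splt ffunE /= !ffunE.
case: ifP => h.
  by congr (u _); apply/val_inj; rewrite /= inordK // ltnS ltnW.
case e: (i - n)%N => [|j] /=.
  congr (u _); apply/val_inj => /=.
  by apply/eqP; rewrite eqn_leq (leqNgt n) h /= -subn_eq0 e.
have hj : (j < m)%N.
  by rewrite -e leq_subLR -ltnS (ltn_ord i).
rewrite /tget (insubT (fun x => x < m)%N hj) /= ffunE; congr (u _); apply/val_inj.
rewrite /= inordK; first by rewrite -e subnKC // leqNgt h.
by rewrite ltnS leq_add2l.
Qed.
End Join.

Definition G m (b : bool) (t : {ffun 'I_m -> bool}) : algC :=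
  \prod_(k < m) 'i ^+ (tbit b t k.+1 != tbit b t k).

Lemma amp_join n m (v : bstr n) (t : {ffun 'I_m -> bool}) :
  amp (join v t) = amp v * G (v ord_max) t.
Proof.
rewrite /amp big_split_ord /=; congr (_ * _); apply: eq_bigr => k _; rewrite /jump.
  by rewrite (joinL _ _ (j := lift ord0 k)) // (joinL _ _ (j := widen_ord (leqnSn n) k)).
rewrite (joinR _ _ (j := k.+1)); last by rewrite /= /bump /= add1n addnS.
by rewrite (joinR _ _ (j := k)).
Qed.

Lemma join_last n m (v : bstr n) (t : {ffun 'I_m -> bool}) :
  join v t ord_max = tbit (v ord_max) t m.
Proof. by rewrite (joinR _ _ (j := m)). Qed.

Lemma mem_join n m (A : {set bstr n}) (v : bstr n) (t : {ffun 'I_m -> bool}) :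
  (join v t \in ext m A) = (v \in A).
Proof.
rewrite inE; apply/existsP/idP.
  case=> v' /andP[Hv' /forallP H].
  suff -> : v = v' by [].
  apply/ffunP => i; move/eqP: (H i) => <-.
  by rewrite (joinL _ _ (j := i)).
move=> Hv; exists v; rewrite Hv /=; apply/forallP => i.
by rewrite (joinL _ _ (j := i)).
Qed.

Lemma Sext n m (A : {set bstr n}) : (forall b, S A b = 0) ->
  forall c, S (ext m A) c = 0.
Proof.
move=> HS c.
have bij : bijective (fun p : bstr n * {ffun 'I_m -> bool} => join p.1 p.2).
  by exists (@splt n m); [exact: joinK | exact: spltK].
rewrite /S (reindex _ (onW_bij _ bij)) /=.
rewrite (eq_bigl (fun p => (p.1 \in A) && true)); last first.
  by move=> p; rewrite /= mem_join andbT.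
rewrite -(pair_big_dep (fun v => v \in A) (fun _ _ => true)
  (fun v t => (join v t ord_max == c)%:R * amp (join v t))) /=.
set K := fun b => \sum_(t : {ffun 'I_m -> bool}) (tbit b t m == c)%:R * G b t.
transitivity (\sum_(v in A) amp v * K (v ord_max)).
  apply: eq_bigr => v _; rewrite /K mulr_sumr; apply: eq_bigr => t _.
  by rewrite join_last amp_join mulrCA.
transitivity (\sum_(b : bool) S A b * K b); last first.
  by apply: big1 => b _; rewrite HS mul0r.
rewrite /S; under [RHS]eq_bigr => b _ do rewrite mulr_suml.
rewrite [RHS]exchange_big; apply: eq_bigr => v _.
rewrite big_bool /=.
by case: (v ord_max); rewrite /= ?mul1r ?mul0r ?addr0 ?add0r.
Qed.

Theorem corollary3p3 (n m : nat) (A : {set bstr n}) :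
  (1 <= n)%N -> (1 <= m)%N -> A \subset Omega n ->
  mu A = 0 -> mu (ext m A) = 0.
Proof.
move=> _ _ _ /S0 HS.
by rewrite muE big1 ?mulr0 // => b _; rewrite (Sext m HS) mul0r.
Qed.
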